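(* For every positive integer $n$ there is a number $M$ such that for every prime $p>M$, the number $np$ satisfies Condition 1 with $p$ and another prime; that is, there is a prime $q\ne p$ such that for every integer $k$ with $1\le k\le np-1$, $\binom{np}{k}$ is divisible by $p$ or by $q$.
   Context: A positive integer $N$ satisfies Condition 1 with primes $p$ and $q$ if for all integers $k$ with $1\le k\le N-1$ the binomial coefficient $\binom{N}{k}$ is divisible by at least one of $p$ or $q$. *)

(* Defs.v *)
From mathcomp Require Import all_boot.

Definition condition1 (N p q : nat) : Prop :=
  forall k : nat, 1 <= k -> k <= N - 1 -> (p %| 'C(N, k)) || (q %| 'C(N, k)).

(* Main.v *)
Require Import Defs.
From mathcomp Require Import all_boot zify.

Lemma logn_fact_w q m N : prime q -> m <= N ->
  logn q m`! = \sum_(1 <= k < N.+1) m %/ q ^ k.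
Proof.
move=> pq mN; rewrite logn_fact //.
rewrite [RHS](big_cat_nat _ (n := m.+1)) //=.
rewrite [X in _ + X]big_nat_cond [X in _ + X]big1 ?addn0 // => k /andP[/andP[km _] _].
apply: divn_small; apply: leq_trans km _; apply: ltnW; apply: ltn_expl.
exact: prime_gt1.
Qed.

Lemma carry q N K i : prime q -> 0 < i -> K <= N ->
  K %/ q ^ i + (N - K) %/ q ^ i < N %/ q ^ i -> q %| 'C(N, K).
Proof.
move=> pq i0 KN lt.
have iN : i < N.+1.
  rewrite ltnS; case: (leqP i N) => // /ltnW Ni.
  have : N %/ q ^ i = 0.
    apply: divn_small; apply: leq_ltn_trans Ni _; apply: ltn_expl; exact: prime_gt1.
  by move=> h; rewrite h in lt.
have hC := bin_fact KN.
have C0 : 0 < 'C(N, K) by rewrite bin_gt0.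
have : logn q N`! = logn q 'C(N, K) + (logn q K`! + logn q (N - K)`!).
  by rewrite -hC !lognM ?fact_gt0 ?muln_gt0 ?fact_gt0.
rewrite (@logn_fact_w q N N pq (leqnn N)) (@logn_fact_w q K N pq KN) (@logn_fact_w q (N - K) N pq (leq_subr K N)).
rewrite -big_split /=.
have mem : i \in index_iota 1 N.+1 by rewrite mem_index_iota i0 iN.
rewrite (bigD1_seq i mem (iota_uniq _ _)) (bigD1_seq i mem (iota_uniq _ _)) /=.
have le : \sum_(k <- index_iota 1 N.+1 | k != i) (K %/ q ^ k + (N - K) %/ q ^ k)
   <= \sum_(k <- index_iota 1 N.+1 | k != i) N %/ q ^ k.
  apply: leq_sum => k _.
  by rewrite -[X in _ <= X %/ _](subnKC KN) divnD ?expn_gt0 ?prime_gt0 // leq_addr.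
move=> E.
have : 0 < logn q 'C(N, K) by lia.
by rewrite logn_gt0 mem_primes => /and3P[].
Qed.

Lemma div_helper y c j p : 0 < j < y -> p.+1 = c * y -> (j * p) %/ y = j * c - 1.
Proof.
move=> /andP[j0 jy] E.
have c0 : 0 < c by move: E; case: c => //.
have -> : j * p = (j * c - 1) * y + (y - j).
  have : j * p.+1 = j * c * y by rewrite E mulnA.
  nia.
by rewrite divnMDl ?divn_small ?addn0; lia.
Qed.

Lemma div_helper2 k p n : prime p -> ~~ (p %| k) -> k <= n * p ->
  k %/ p + (n * p - k) %/ p < n.
Proof.
move=> pp nd kN.
have p0 := prime_gt0 pp.
have r0 : 0 < k %% p by rewrite lt0n -/(dvdn p k); exact: nd.
have rp : k %% p < p by rewrite ltn_mod.
have ek := divn_eq k p.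
have an : k %/ p < n.
  rewrite ltnNge; apply/negP => h.
  have : n * p <= k %/ p * p by rewrite leq_mul2r h orbT.
  lia.
have -> : n * p - k = (n - k %/ p - 1) * p + (p - k %% p).
  move: ek an rp; set a := k %/ p; set r := k %% p => ek an rp.
  have [d hd] : exists d, n = a.+1 + d by exists (n - a.+1); lia.
  rewrite ek hd.
  have -> : a.+1 + d - a - 1 = d by lia.
  rewrite !mulnDl; lia.
rewrite divnMDl // [(p - _) %/ p]divn_small; lia.
Qed.
Theorem mainTheorem2 :
  forall n : nat, 0 < n ->
  exists M : nat, forall p : nat, prime p -> M < p ->
    exists q : nat, [/\ prime q, q != p & condition1 (n * p) p q].
Proof.
move=> n n0; exists n`! => p pp Mp.
have p0 := prime_gt0 pp.
case: (boolP (has (fun q => n < q ^ logn q p.+1) (primes p.+1))); last first.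
  move=> /hasPn H.
  have : p.+1 %| n`!.
    apply/dvdn_partP => // q qin.
    rewrite p_part; apply: dvdn_fact; rewrite expn_gt0 prime_gt0 /=.
      by rewrite leqNgt; exact: H.
    by move: qin; rewrite mem_primes => /and3P[].
  move/dvdn_leq => /(_ (fact_gt0 n)); lia.
case/hasP => q qin hq.
move: qin; rewrite mem_primes => /and3P[pq _ qd].
set e := logn q p.+1 in hq.
set y := q ^ e in hq.
have yd : y %| p.+1 by exact: pfactor_dvdnn.
have e0 : 0 < e.
  rewrite lt0n; apply/eqP => he; move: hq; rewrite /y he expn0; lia.
have [c Ec] : exists c, p.+1 = c * y by exists (p.+1 %/ y); rewrite divnK.
exists q; split => //.
  apply/eqP => qp; subst q.
  move: qd; rewrite -addn1 dvdn_addr ?dvdnn // dvdn1 => /eqP p1.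
  by move: pp; rewrite p1.
move=> k k1 kN.
case: (boolP (p %| k)) => hk.
  apply/orP; right.
  set j := k %/ p.
  have kj : k = j * p by rewrite divnK.
  have j1 : 0 < j by move: k1; rewrite kj; case: (j) => //.
  have jn : j < n.
    rewrite ltnNge; apply/negP => h.
    have : n * p <= j * p by rewrite leq_mul2r h orbT.
    lia.
  apply: (@carry q (n * p) k e pq e0); first lia.
  have -> : n * p - k = (n - j) * p by rewrite kj mulnBl.
  rewrite kj !(@div_helper y c _ p) //; try (apply/andP; split; lia).
  have c0 : 0 < c by move: Ec; case: (c).
  have jc : 0 < j * c by rewrite muln_gt0 j1 c0.
  have njc : 0 < (n - j) * c by rewrite muln_gt0 subn_gt0 jn c0.
  have -> : n * c = j * c + (n - j) * c by rewrite -mulnDl subnKC // ltnW.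
  lia.
apply/orP; left.
apply: (@carry p (n * p) k 1 pp) => //; first lia.
rewrite expn1 mulnK //.
apply: div_helper2 => //; lia.
Qed.
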